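(* Let $f:\mathbb{R}^n\to\mathbb{R}\cup\{+\infty\}$ be a closed proper convex function, $A\in\mathbb{R}^{m\times n}$, $b\in\mathbb{R}^m$, with $\mathrm{ri}(\mathrm{dom}\,f)\cap\mathrm{im}(A)\neq\emptyset$, and consider the problem $\min_x f(x)$ subject to $Ax=b$, with Lagrangian $L(x,\lambda)=f(x)-\langle\lambda,Ax-b\rangle$. Let $(x^*,\lambda^* )$ be a saddle point of $L$ (i.e. $L(x^*,\lambda)\leqslant L(x^*,\lambda^* )\leqslant L(x,\lambda^* )$ for all $x,\lambda$). Let $H\in\mathbb{R}^{m\times m}$ be symmetric positive definite and $(A_k),(a_k),(b_k),(c_k)$ be real sequences with $a_k>0$, $c_k>0$ for all $k$, $b_k>0$ for $k\geqslant1$, satisfying $$A_{k+1}-A_k\leqslant a_k,\quad A_k=a_kb_k,\quad A_0=b_0=0,\quad c_k\geqslant a_k.$$ Let $\lambda_0\in\mathbb{R}^m$, $z_0=\lambda_0$, and for $k\geqslant0$ $$\tilde\lambda_{k+1}=\frac{1}{b_k+1}z_k+\frac{b_k}{b_k+1}\lambda_k,\qquad x_{k+1}\in\arg\min_x\Big\{f(x)-\langle\tilde\lambda_{k+1},Ax-b\rangle+\frac{c_k}{2(b_k+1)}\|Ax-b\|_H^2\Big\},$$ $$\lambda_{k+1}=\tilde\lambda_{k+1}-\frac{c_k}{b_k+1}H(Ax_{k+1}-b),\qquad z_{k+1}=z_k-a_kH(Ax_{k+1}-b),$$ where the minimizers are assumed to exist. Then for every $k\geqslant1$, $$f(x^*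 )-f(x_k)+\langle\lambda_k,Ax_k-b\rangle\leqslant\frac{\|\lambda_0-\lambda^*\|^2_{H^{-1}}}{2A_k},$$ and for every $k\geqslant0$, $$\min_{0\leqslant j\leqslant k}\|Ax_{j+1}-b\|_H^2\leqslant\frac{\|\lambda_0-\lambda^*\|^2_{H^{-1}}}{\sum_{j=0}^ka_j^2}.$$
   Context: $\|u\|_M^2=u^{\mathrm T}Mu$ for a symmetric positive definite matrix $M$; $\mathrm{ri}$ denotes relative interior and $\mathrm{im}(A)$ the range of $A$. *)

(* Defs.v *)
From HB Require Import structures.
From mathcomp Require Import all_boot all_order all_algebra.
From mathcomp Require Import reals constructive_ereal.
Set Implicit Arguments. Unset Strict Implicit. Unset Printing Implicit Defensive.
Import Order.TTheory GRing.Theory Num.Theory.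
Local Open Scope ring_scope.

Section Defs.
Variable R : realType.

Definition inner {m : nat} (u v : 'cV[R]_m) : R := (u^T *m v) 0 0.

Definition mnorm2 {m : nat} (M : 'M[R]_m) (u : 'cV[R]_m) : R := (u^T *m M *m u) 0 0.

Definition spd {m : nat} (M : 'M[R]_m) : Prop :=
  M^T = M /\ forall u : 'cV[R]_m, u != 0 -> 0 < mnorm2 M u.

Definition dom {n : nat} (f : 'cV[R]_n -> \bar R) : 'cV[R]_n -> Prop :=
  fun x => (f x < +oo)%E.

Definition aff_hull {n : nat} (S : 'cV[R]_n -> Prop) : 'cV[R]_n -> Prop :=
  fun y => exists (k : nat) (p : 'I_k -> 'cV[R]_n) (w : 'I_k -> R),
    (forall i, S (p i)) /\ \sum_(i < k) w i = 1 /\ y = \sum_(i < k) w i *: p i.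

Definition rel_int {n : nat} (S : 'cV[R]_n -> Prop) : 'cV[R]_n -> Prop :=
  fun x => S x /\ exists eps : R, 0 < eps /\
    forall y, aff_hull S y -> inner (y - x) (y - x) < eps -> S y.

Definition proper_fun {n : nat} (f : 'cV[R]_n -> \bar R) : Prop :=
  (forall x, f x != -oo%E) /\ exists x, (f x < +oo)%E.

(* convex (for extended-real-valued functions not taking -oo) *)
Definition convex_fun {n : nat} (f : 'cV[R]_n -> \bar R) : Prop :=
  forall (x y : 'cV[R]_n) (t : R), 0 < t < 1 ->
    (f (t *: x + (1 - t) *: y)%R <= t%:E * f x + (1 - t)%:E * f y)%E.

(* closed = lower semicontinuous (Euclidean topology) *)
Definition closed_fun {n : nat} (f : 'cV[R]_n -> \bar R) : Prop :=
  forall (x : 'cV[R]_n) (alpha : R), (alpha%:E < f x)%E ->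
    exists delta : R, 0 < delta /\
      forall y, inner (y - x) (y - x) < delta -> (alpha%:E < f y)%E.

Definition lagrangian {m n : nat} (f : 'cV[R]_n -> \bar R) (A : 'M[R]_(m, n))
  (b : 'cV[R]_m) (x : 'cV[R]_n) (lam : 'cV[R]_m) : \bar R :=
  (f x - (inner lam (A *m x - b)%R)%:E)%E.

Definition saddle_point {m n : nat} (f : 'cV[R]_n -> \bar R) (A : 'M[R]_(m, n))
  (b : 'cV[R]_m) (xs : 'cV[R]_n) (ls : 'cV[R]_m) : Prop :=
  (forall lam, (lagrangian f A b xs lam <= lagrangian f A b xs ls)%E) /\
  (forall x, (lagrangian f A b xs ls <= lagrangian f A b x ls)%E).

End Defs.

(* Main.v *)
Require Import Defs.
From HB Require Import structures.
From mathcomp Require Import all_boot all_order all_algebra.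
From mathcomp Require Import reals constructive_ereal.
From mathcomp Require Import ring lra.
Import Order.TTheory GRing.Theory Num.Theory.
Local Open Scope ring_scope.

Set Implicit Arguments. Unset Strict Implicit.
Section Aux.
Variable R : realType.

Lemma innerDl m (u v w : 'cV[R]_m) : inner (u + v) w = inner u w + inner v w.
Proof. by rewrite /inner linearD /= mulmxDl mxE. Qed.
Lemma innerDr m (u v w : 'cV[R]_m) : inner w (u + v) = inner w u + inner w v.
Proof. by rewrite /inner mulmxDr mxE. Qed.
Lemma innerZl m (a : R) (u w : 'cV[R]_m) : inner (a *: u) w = a * inner u w.
Proof. by rewrite /inner linearZ /= -scalemxAl mxE. Qed.
Lemma innerZr m (a : R) (u w : 'cV[R]_m) : inner w (a *: u) = a * inner w u.
Proof. by rewrite /inner -scalemxAr mxE. Qed.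
Lemma innerNl m (u w : 'cV[R]_m) : inner (- u) w = - inner u w.
Proof. by rewrite -scaleN1r innerZl mulN1r. Qed.
Lemma innerNr m (u w : 'cV[R]_m) : inner w (- u) = - inner w u.
Proof. by rewrite -scaleN1r innerZr mulN1r. Qed.
Lemma innerBl m (u v w : 'cV[R]_m) : inner (u - v) w = inner u w - inner v w.
Proof. by rewrite innerDl innerNl. Qed.
Lemma innerBr m (u v w : 'cV[R]_m) : inner w (u - v) = inner w u - inner w v.
Proof. by rewrite innerDr innerNr. Qed.
Lemma innerC m (u w : 'cV[R]_m) : inner u w = inner w u.
Proof.
rewrite /inner; transitivity ((u^T *m w)^T 0 0); first by rewrite [RHS]mxE.
by rewrite trmx_mul trmxK.
Qed.
Lemma inner_mul m (M : 'M[R]_m) (u w : 'cV[R]_m) :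
  inner u (M *m w) = inner (M^T *m u) w.
Proof. by rewrite /inner trmx_mul trmxK mulmxA. Qed.
Lemma mnorm2E m (M : 'M[R]_m) (u : 'cV[R]_m) : mnorm2 M u = inner u (M *m u).
Proof. by rewrite /mnorm2 /inner mulmxA. Qed.

Lemma spd_ge0 m (M : 'M[R]_m) u : spd M -> 0 <= mnorm2 M u.
Proof.
move=> [_ hp]; have [->|nz] := eqVneq u 0.
  by rewrite /mnorm2 mulmx0 mxE.
exact: ltW (hp _ nz).
Qed.

Lemma spd_unit m (M : 'M[R]_m) : spd M -> M \in unitmx.
Proof.
move=> [_ hp]; rewrite unitmxE unitfE; apply/negP => /det0P [v vn0 hv].
have : v^T != 0 by apply: contra vn0 => /eqP h; rewrite -[v]trmxK h trmx0.
move=> /hp; rewrite /mnorm2 trmxK hv mul0mx mxE ltxx //.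
Qed.

Lemma spd_inv_ge0 m (M : 'M[R]_m) u : spd M -> 0 <= mnorm2 (invmx M) u.
Proof.
move=> hM; have hU := spd_unit hM.
have -> : u = M *m (invmx M *m u) by rewrite mulmxA mulmxV // mul1mx.
case: (hM) => hT _.
rewrite mnorm2E mulmxA mulVmx // mul1mx.
rewrite innerC -mnorm2E.
exact: spd_ge0.
Qed.
End Aux.

Section Aux2.
Variable R : realType.

Lemma lim_ge0 (D K : R) : (forall t, 0 < t < 1 -> 0 <= D + t * K) -> 0 <= D.
Proof.
move=> h; rewrite leNgt; apply/negP => hD.
set K' := `|K| + 1.
have hK' : 0 < K' by rewrite /K'; have := normr_ge0 K; lra.
have hKK : K <= `|K| := ler_norm K.
have hden : 0 < 2 * (K' - D) by lra.
set t := (- D) / (2 * (K' - D)).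
have ht0 : 0 < t by rewrite /t divr_gt0 //; lra.
have htE : t * (2 * (K' - D)) = - D by rewrite /t mulfVK // gt_eqF.
have ht1 : t < 1 by nra.
have := h t; rewrite ht0 ht1 => /(_ isT) H0.
have h1 : t * K <= t * `|K| by rewrite ler_pM2l.
have h2 : t * D < 0 by rewrite pmulr_rlt0.
rewrite /K' in htE; lra.
Qed.
End Aux2.

Section Aux3.
Variable R : realType.

Lemma argmin_subgrad m n (f : 'cV[R]_n -> \bar R) (A : 'M[R]_(m,n)) b
  (H : 'M[R]_m) (lt : 'cV[R]_m) (beta : R) (x' y : 'cV[R]_n) (F' Fy : R) :
  convex_fun f -> (forall x, f x != -oo%E) -> H^T = H ->
  f x' = F'%:E -> f y = Fy%:E ->
  (forall y, (f x' - (inner lt (A *m x' - b))%:E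
      + (beta * mnorm2 H (A *m x' - b))%:E
     <= f y - (inner lt (A *m y - b))%:E + (beta * mnorm2 H (A *m y - b))%:E)%E) ->
  F' + inner (lt - (2 * beta) *: (H *m (A *m x' - b))) (A *m y - A *m x') <= Fy.
Proof.
move=> hconv hninf hT hx hy hmin.
set r := A *m x' - b; set d := A *m y - A *m x'.
suff : 0 <= Fy - F' - inner (lt - (2 * beta) *: (H *m r)) d by lra.
apply: (@lim_ge0 _ _ (beta * mnorm2 H d)) => t ht.
have hc := hconv y x' t ht.
rewrite hx hy -!EFinM -EFinD in hc.
set yt := t *: y + (1 - t) *: x' in hc.
have hfin : f yt \is a fin_num.
  apply/fin_numP; split; first exact: hninf.
  by apply: contraTneq hc => ->; rewrite leye_eq.
set Ft := fine (f yt).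
have hFt : f yt = Ft%:E by rewrite fineK.
rewrite hFt lee_fin in hc.
have := hmin yt; rewrite hFt hx -!EFinB -!EFinD lee_fin => hm.
have hrt : A *m yt - b = r + t *: d.
  rewrite /yt mulmxDr -!scalemxAr /r /d.
  apply/matrixP => i j; rewrite !mxE; ring.
rewrite hrt -/r in hm.
move: ht => /andP [ht0 ht1].
have hsym : inner r (H *m d) = inner d (H *m r).
  by rewrite inner_mul hT innerC.
clearbody r d.
move: hm; rewrite !mnorm2E !mulmxDr -!scalemxAr !innerDr !innerDl !innerZr !innerZl hsym.
rewrite innerNl innerZl (innerC (H *m r) d).
set X1 := inner lt r; set X2 := inner lt d; set X3 := inner r (H *m r).
set X4 := inner d (H *m r); set X5 := inner d (H *m d).
move=> hm.
have : 0 <= t * (Fy - F' - (X2 - 2 * beta * X4) + t * (beta * X5)) by nra.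
by rewrite pmulr_rge0 // => h; lra.
Qed.
End Aux3.

Section Aux4.
Variable R : realType.
Lemma inner_self_le0 m (u : 'cV[R]_m) : inner u u <= 0 -> u = 0.
Proof.
move=> h.
have hs : \sum_(i < m) u i 0 * u i 0 = 0.
  apply/eqP; rewrite eq_le; apply/andP; split.
    by move: h; rewrite /inner mxE; under eq_bigr do rewrite mxE.
  by apply: sumr_ge0 => i _; rewrite -expr2 sqr_ge0.
have h0 : forall i, u i 0 * u i 0 = 0.
  have hnn : forall i : 'I_m, true -> 0 <= u i 0 * u i 0 by move=> i _; rewrite -expr2 sqr_ge0.
  by move=> i; apply: (psumr_eq0P hnn hs).
apply/matrixP => i j; rewrite (ord1 j) mxE.
by have /eqP := h0 i; rewrite mulf_eq0 orbb => /eqP.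
Qed.

Lemma minexists (G : nat -> R) k : exists j, (j <= k)%N /\ forall i, (i <= k)%N -> G j <= G i.
Proof.
elim: k => [|k [j [hj hmin]]].
  by exists 0%N; split => // i; rewrite leqn0 => /eqP ->.
have [hle|hlt] := lerP (G j) (G k.+1).
  exists j; split; first exact: leqW.
  move=> i; rewrite leq_eqVlt => /orP [/eqP ->//|]; rewrite ltnS; exact: hmin.
exists k.+1; split => // i; rewrite leq_eqVlt => /orP [/eqP ->//|]; rewrite ltnS => hi.
exact: le_trans (ltW hlt) (hmin _ hi).
Qed.
Lemma normstep m (Hm : 'M[R]_m) (w g : 'cV[R]_m) a : Hm^T = Hm -> Hm \in unitmx ->
  mnorm2 (invmx Hm) (w - a *: (Hm *m g))
  = mnorm2 (invmx Hm) w - 2 * a * inner w g + a ^+ 2 * mnorm2 Hm g.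
Proof.
move=> hT hU.
rewrite !mnorm2E mulmxBr -scalemxAr mulmxA mulVmx // mul1mx.
rewrite !innerBl !innerBr !innerZl !innerZr.
have -> : inner (Hm *m g) (invmx Hm *m w) = inner w g.
  by rewrite innerC inner_mul hT mulmxA mulmxV // mul1mx.
rewrite (innerC (Hm *m g) g) expr2; ring.
Qed.
End Aux4.

Unset Implicit Arguments.
Theorem corollary1 (R : realType) (m n : nat)
  (f : 'cV[R]_n -> \bar R) (Amat : 'M[R]_(m, n)) (b : 'cV[R]_m)
  (xs : 'cV[R]_n) (ls : 'cV[R]_m) (H : 'M[R]_m)
  (Aseq aseq bseq cseq : nat -> R)
  (x : nat -> 'cV[R]_n) (lam z lamt : nat -> 'cV[R]_m) :
  closed_fun f -> proper_fun f -> convex_fun f ->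
  (exists x0, rel_int (dom f) x0 /\ Amat *m x0 = b) ->
  saddle_point f Amat b xs ls ->
  spd H ->
  (forall k, 0 < aseq k) -> (forall k, 0 < cseq k) ->
  (forall k, (1 <= k)%N -> 0 < bseq k) ->
  (forall k, Aseq k.+1 - Aseq k <= aseq k) ->
  (forall k, Aseq k = aseq k * bseq k) ->
  Aseq 0%N = 0 -> bseq 0%N = 0 ->
  (forall k, aseq k <= cseq k) ->
  z 0%N = lam 0%N ->
  (forall k, lamt k.+1 = (bseq k + 1)^-1 *: z k + (bseq k / (bseq k + 1)) *: lam k) ->
  (forall k (y : 'cV[R]_n),
     (f (x k.+1) - (inner (lamt k.+1) (Amat *m x k.+1 - b))%:E
        + (cseq k / (2 * (bseq k + 1)) * mnorm2 H (Amat *m x k.+1 - b))%:E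
      <= f y - (inner (lamt k.+1) (Amat *m y - b))%:E
        + (cseq k / (2 * (bseq k + 1)) * mnorm2 H (Amat *m y - b))%:E)%E) ->
  (forall k, lam k.+1 = lamt k.+1 - (cseq k / (bseq k + 1)) *: (H *m (Amat *m x k.+1 - b))) ->
  (forall k, z k.+1 = z k - aseq k *: (H *m (Amat *m x k.+1 - b))) ->
  (forall k, (1 <= k)%N ->
     (f xs - f (x k) + (inner (lam k) (Amat *m x k - b))%:E
       <= (mnorm2 (invmx H) (lam 0%N - ls) / (2 * Aseq k))%:E)%E) /\
  (forall k, exists j : nat, (j <= k)%N /\
     mnorm2 H (Amat *m x j.+1 - b)
       <= mnorm2 (invmx H) (lam 0%N - ls) / (\sum_(0 <= i < k.+1) aseq i ^+ 2)).
Proof.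
move=> hcl hprop hconv hri [hsad1 hsad2] hH ha hc hb hAd hAab hA0 hb0 hac hz0
  hlt hmin hlam hz.
have hninf : forall y, f y != -oo%E by case: hprop.
case: (hH) => hT _.
have hU := spd_unit hH.
have hfs : f xs \is a fin_num.
  apply/fin_numP; split; first exact: hninf.
  apply/negP => /eqP hinf.
  case: hprop => _ [y hy].
  have := hsad2 y; rewrite /lagrangian hinf addye // leye_eq => /eqP.
  by move: hy; case: (f y) => [r| |] //= _; rewrite -EFinB.
pose fs := fine (f xs).
have hfsE : f xs = fs%:E by rewrite fineK.
have hAxs : Amat *m xs - b = 0.
  apply: inner_self_le0.
  have := hsad1 (ls - (Amat *m xs - b)).
  rewrite /lagrangian hfsE -!EFinB lee_fin innerBl; lra.
have hAxs' : Amat *m xs = b by apply/eqP; rewrite -subr_eq0 hAxs.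
have hfx : forall k, f (x k.+1) \is a fin_num.
  move=> k; apply/fin_numP; split; first exact: hninf.
  apply/negP => /eqP hinf.
  have := hmin k xs; rewrite hinf hfsE addye // addye // -EFinB -EFinD leye_eq.
pose Fv k := fine (f (x k)).
have hFv : forall k, f (x k.+1) = (Fv k.+1)%:E by move=> k; rewrite fineK.
have hb0' : forall k, 0 <= bseq k.
  by case=> [|k]; [rewrite hb0 | exact: ltW (hb k.+1 isT)].
have hG : forall k y Fy, f y = Fy%:E ->
    Fv k.+1 + inner (lam k.+1) (Amat *m y - Amat *m x k.+1) <= Fy.
  move=> k y Fy hy.
  have := argmin_subgrad hconv hninf hT (hFv k) hy (hmin k).
  have -> : 2 * (cseq k / (2 * (bseq k + 1))) = cseq k / (bseq k + 1).
    have := hb0' k => hbk.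
    by field; rewrite gt_eqF //; lra.
  by rewrite hlam.
have inner0r : forall u : 'cV[R]_m, inner u 0 = 0.
  by move=> u; rewrite /inner mulmx0 mxE.
pose r k := Amat *m x k - b.
pose phi k := fs - (Fv k - inner (lam k) (r k)).
pose N k := mnorm2 (invmx H) (z k - ls).
pose Gn k := mnorm2 H (r k.+1).
pose E k := Aseq k * phi k + N k / 2.
have hN0 : forall k, 0 <= N k by move=> k; exact: spd_inv_ge0.
have hG0 : forall k, 0 <= Gn k by move=> k; exact: spd_ge0.
have hphi0 : forall k, 0 <= phi k.+1.
  move=> k; have := hG k xs fs hfsE.
  rewrite hAxs' -opprB innerNr /phi /r; lra.
have hsd : forall k, fs <= Fv k.+1 - inner ls (r k.+1).
  move=> k; have := hsad2 (x k.+1).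
  by rewrite /lagrangian hfsE hFv hAxs inner0r -!EFinB lee_fin subr0.
have hi : forall k, Fv k.+1 - inner (lam k.+1) (r k.+1)
    <= Fv k.+2 - inner (lam k.+1) (r k.+2).
  move=> k; have := hG k (x k.+2) (Fv k.+2) (hFv k.+1).
  have -> : Amat *m x k.+2 - Amat *m x k.+1 = r k.+2 - r k.+1.
    by rewrite /r opprB addrA subrK.
  rewrite innerBr; lra.
have hbphi0 : forall k, bseq k * phi k.+1 <=
    bseq k * (phi k + inner (lam k.+1) (r k.+1) - inner (lam k) (r k.+1)).
  case=> [|k]; first by rewrite hb0 !mul0r.
  apply: ler_wpM2l; first exact: hb0'.
  have := hi k; rewrite /phi; lra.
have hstep : forall k, E k.+1 + aseq k ^+ 2 / 2 * Gn k <= E k.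
  move=> k.
  set g := r k.+1.
  set Il' := inner (lam k.+1) g; set Il := inner (lam k) g.
  set Is := inner ls g; set Iz := inner (z k) g.
  have hbk := hb0' k; have hak := ha k; have hck := hac k.
  have hv : (bseq k + 1) * Il' = Iz + bseq k * Il - cseq k * Gn k.
    rewrite /Il' hlam hlt innerBl !innerDl !innerZl.
    have -> : inner (H *m (Amat *m x k.+1 - b)) g = Gn k.
      by rewrite /Gn mnorm2E innerC.
    rewrite -/Iz -/Il; field; rewrite gt_eqF //; lra.
  have hvi : N k.+1 = N k - 2 * aseq k * (Iz - Is) + aseq k ^+ 2 * Gn k.
    rewrite /N hz addrAC normstep // innerBl -/Gn -/Iz -/Is.
    by [].
  have hphi' : phi k.+1 <= Il' - Is by have := hsd k; rewrite /phi /Il' /Is /g; lra.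
  have hbphi : bseq k * phi k.+1 <= bseq k * (phi k + Il' - Il) by apply: hbphi0.
  have hA1 : Aseq k.+1 <= aseq k * (bseq k + 1).
    have := hAd k; rewrite (hAab k); lra.
  have p1 : Aseq k.+1 * phi k.+1 <= aseq k * (bseq k + 1) * phi k.+1.
    by apply: ler_wpM2r.
  have p2 : aseq k * (bseq k * phi k.+1) <= aseq k * (bseq k * (phi k + Il' - Il)).
    by apply: ler_wpM2l => //; exact: ltW.
  have p3 : aseq k * phi k.+1 <= aseq k * (Il' - Is).
    by apply: ler_wpM2l => //; exact: ltW.
  have p4 : aseq k * ((bseq k + 1) * Il') = aseq k * (Iz + bseq k * Il - cseq k * Gn k).
    by rewrite hv.
  have p5 : aseq k * aseq k * Gn k <= aseq k * cseq k * Gn k.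
    by apply: ler_wpM2r => //; apply: ler_wpM2l => //; exact: ltW.
  rewrite /E hvi (hAab k) expr2.
  lra.
have htel : forall k, E k + \sum_(0 <= i < k) (aseq i ^+ 2 / 2 * Gn i) <= E 0%N.
  elim=> [|k IH]; first by rewrite big_geq // addr0.
  rewrite big_nat_recr //=; have := hstep k; lra.
have hE0 : E 0%N = mnorm2 (invmx H) (lam 0%N - ls) / 2.
  by rewrite /E hA0 mul0r add0r /N hz0.
have hsum0 : forall k, 0 <= \sum_(0 <= i < k) (aseq i ^+ 2 / 2 * Gn i).
  move=> k; apply: sumr_ge0 => i _; apply: mulr_ge0 => //.
  by apply: divr_ge0 => //; exact: sqr_ge0.
split.
  case=> [|k] // _.
  rewrite hfsE hFv -EFinB -EFinD lee_fin.
  have hAk : 0 < Aseq k.+1 by rewrite hAab mulr_gt0 //; exact: hb.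
  rewrite ler_pdivlMr; last by rewrite mulr_gt0.
  have := htel k.+1; have := hsum0 k.+1; have := hN0 k.+1.
  rewrite hE0 /E /phi /r; lra.
move=> k.
have [j [hj hjmin]] := minexists Gn k.
exists j; split => //.
have hS : 0 < \sum_(0 <= i < k.+1) aseq i ^+ 2.
  rewrite big_nat_recl // ltr_pwDl //; first by rewrite exprn_gt0.
  by apply: sumr_ge0 => i _; exact: sqr_ge0.
rewrite ler_pdivlMr // mulr_sumr.
have h1 : \sum_(0 <= i < k.+1) Gn j * aseq i ^+ 2
    <= \sum_(0 <= i < k.+1) (aseq i ^+ 2 / 2 * Gn i) * 2.
  apply: ler_sum_nat => i /andP [_ hik].
  have := hjmin i hik => hji.
  have := sqr_ge0 (aseq i) => ha2.
  have : Gn j * aseq i ^+ 2 <= Gn i * aseq i ^+ 2 by apply: ler_wpM2r.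
  lra.
rewrite -mulr_suml in h1.
have := htel k.+1; have := hphi0 k; have := hN0 k.+1.
have hAk : 0 <= Aseq k.+1 by rewrite hAab mulr_ge0 //; apply: ltW => //; exact: hb.
have := mulr_ge0 hAk (hphi0 k).
rewrite hE0 /E; rewrite /Gn in h1 *; lra.
Qed.
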